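(* Let $S$ be a straight left I-order in an inverse semigroup $Q$, and let $a,b,c,d\in S$ with $a\,\mathcal{R}^Q\,b$ and $c\,\mathcal{R}^Q\,d$. Then $a^{-1}b=c^{-1}d$ in $Q$ if and only if there exist $x,y\in S$ such that \[xa=yc,\quad xb=yd,\quad x\,\mathcal{R}^Q\,xa\,\mathcal{L}^Q\,a,\quad y\,\mathcal{R}^Q\,yc\,\mathcal{L}^Q\,c.\]
   Context: $a^{-1}$ is the unique inverse of $a$ in $Q$; $\mathcal{R}^Q,\mathcal{L}^Q$ are Green's relations of $Q$. A subsemigroup $S$ of $Q$ is a straight left I-order in $Q$ if every $q\in Q$ can be written $q=a^{-1}b$ with $a,b\in S$ and $a\,\mathcal{R}^Q\,b$. *)

(* Defs.v *)
Record InverseSemigroup := {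
  carrier :> Type;
  mul : carrier -> carrier -> carrier;
  inv : carrier -> carrier;
  mul_assoc : forall x y z, mul x (mul y z) = mul (mul x y) z;
  inv_l : forall a, mul (mul a (inv a)) a = a;
  inv_r : forall a, mul (mul (inv a) a) (inv a) = inv a;
  inv_unique : forall a b, mul (mul a b) a = a -> mul (mul b a) b = b -> b = inv a
}.

Arguments mul {_} _ _.
Arguments inv {_} _.

Section Green.
Variable Q : InverseSemigroup.

(** Green's R-relation: a Q^1 = b Q^1. *)
Definition greenR (a b : Q) : Prop :=
  (a = b \/ exists u : Q, a = mul b u) /\ (b = a \/ exists u : Q, b = mul a u).

(** Green's L-relation: Q^1 a = Q^1 b. *)
Definition greenL (a b : Q) : Prop :=
  (a = b \/ exists u : Q, a = mul u b) /\ (b = a \/ exists u : Q, b = mul u a).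

Definition subsemigroup (S : Q -> Prop) : Prop :=
  forall a b, S a -> S b -> S (mul a b).

Definition straight_left_I_order (S : Q -> Prop) : Prop :=
  subsemigroup S /\
  forall q : Q, exists a b : Q, S a /\ S b /\ greenR a b /\ q = mul (inv a) b.
End Green.

Arguments greenR {Q} _ _.
Arguments greenL {Q} _ _.
Arguments subsemigroup {Q} _.
Arguments straight_left_I_order {Q} _.

(* Main.v *)
Require Import Defs.
From Stdlib Require Import Setoid.

Section IS.
Variable Q : InverseSemigroup.
Local Infix "**" := (@mul Q) (at level 40, left associativity).
Local Notation i := (@inv Q).

Ltac norm := repeat rewrite mul_assoc.

Lemma lctx (p q : Q) : p = q -> forall w, w ** p = w ** q.
Proof. intros ->; reflexivity. Qed.

Lemma idem_inv (e : Q) : e ** e = e -> i e = e.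
Proof. intro H. symmetry. apply (inv_unique Q); rewrite H; exact H. Qed.

Lemma inv_inv (a : Q) : i (i a) = a.
Proof. symmetry. apply (inv_unique Q). apply inv_r. apply inv_l. Qed.

Lemma inv_l' (a w : Q) : w ** a ** i a ** a = w ** a.
Proof. rewrite <- !mul_assoc. rewrite (mul_assoc _ a). rewrite inv_l. reflexivity. Qed.
Lemma inv_r' (a w : Q) : w ** i a ** a ** i a = w ** i a.
Proof. rewrite <- !mul_assoc. rewrite (mul_assoc _ (i a)). rewrite inv_r. reflexivity. Qed.

Lemma idem_mul (e f : Q) : e ** e = e -> f ** f = f -> (e ** f) ** (e ** f) = e ** f.
Proof.
  intros He Hf.
  assert (He' : forall w, w ** e ** e = w ** e).
  { intro w. rewrite <- mul_assoc, He. reflexivity. }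
  assert (Hf' : forall w, w ** f ** f = w ** f).
  { intro w. rewrite <- mul_assoc, Hf. reflexivity. }
  set (z := i (e ** f)).
  assert (Hz1 : e ** f ** z ** e ** f = e ** f).
  { pose proof (inv_l _ (e ** f)). fold z in H. norm. repeat rewrite mul_assoc in H. exact H. }
  assert (Hz2 : z ** e ** f ** z = z).
  { pose proof (inv_r _ (e ** f)). fold z in H. norm. repeat rewrite mul_assoc in H. exact H. }
  assert (Hfze : f ** z ** e = z).
  { unfold z at 2. apply (inv_unique Q).
    - norm. rewrite He', Hf'. exact Hz1.
    - norm. rewrite He', Hf'.
      replace (f ** z ** e ** f ** z ** e) with (f ** (z ** e ** f ** z) ** e) by (norm; reflexivity).
      rewrite Hz2. reflexivity. }
  assert (Hzz : z ** z = z).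
  { rewrite <- Hfze at 1 2.
    replace (f ** z ** e ** (f ** z ** e)) with (f ** (z ** e ** f ** z) ** e) by (norm; reflexivity).
    rewrite Hz2. exact Hfze. }
  assert (Hef : e ** f = z).
  { rewrite <- (idem_inv z Hzz). apply (inv_unique Q).
    - norm. exact Hz2.
    - norm. exact Hz1. }
  rewrite Hef. exact Hzz.
Qed.

Lemma idem_comm (e f : Q) : e ** e = e -> f ** f = f -> e ** f = f ** e.
Proof.
  intros He Hf.
  pose proof (idem_mul e f He Hf) as H1.
  rewrite <- (idem_inv _ H1). symmetry. apply (inv_unique Q).
  - rewrite <- !mul_assoc. rewrite (mul_assoc _ f f), Hf. rewrite (mul_assoc _ e e), He.
    rewrite !mul_assoc. rewrite <- mul_assoc. exact H1.
  - rewrite <- !mul_assoc. rewrite (mul_assoc _ e e), He. rewrite (mul_assoc _ f f), Hf.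
    rewrite !mul_assoc. rewrite <- mul_assoc. exact (idem_mul f e Hf He).
Qed.

Lemma idl (a : Q) : i a ** a ** (i a ** a) = i a ** a.
Proof. norm. rewrite inv_r. reflexivity. Qed.
Lemma idr (a : Q) : a ** i a ** (a ** i a) = a ** i a.
Proof. norm. rewrite inv_l. reflexivity. Qed.

Lemma inv_mul (p q : Q) : i (p ** q) = i q ** i p.
Proof.
  symmetry. apply (inv_unique Q).
  - assert (E : p ** q ** (i q ** i p) ** (p ** q) = p ** (q ** i q ** (i p ** p)) ** q).
    { norm. reflexivity. }
    rewrite E, (idem_comm _ _ (idr q) (idl p)). norm. rewrite inv_l'. rewrite inv_l. reflexivity.
  - assert (E : i q ** i p ** (p ** q) ** (i q ** i p) = i q ** (i p ** p ** (q ** i q)) ** i p).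
    { norm. reflexivity. }
    rewrite E, (idem_comm _ _ (idl p) (idr q)). norm. rewrite inv_r'. rewrite inv_r. reflexivity.
Qed.

Lemma LemR (a b : Q) : greenR a b -> b ** i b ** a = a.
Proof.
  intros [[-> | [u ->]] _].
  - apply inv_l.
  - norm. rewrite inv_l. reflexivity.
Qed.

Lemma greenR_sym (a b : Q) : greenR a b -> greenR b a.
Proof. intros [H1 H2]; split; assumption. Qed.

Lemma LemL (p q : Q) : greenL p q -> q ** (i p ** p) = q.
Proof.
  intros [_ [-> | [u ->]]].
  - norm. apply inv_l.
  - norm. rewrite inv_l'. reflexivity.
Qed.

Lemma back (a b x : Q) : greenR a b -> greenL (x ** a) a ->
  i a ** b = i (x ** a) ** (x ** b).
Proof.
  intros Hab La.
  pose proof (LemL _ _ La) as L. rewrite inv_mul in L.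
  pose proof (LemR b a (greenR_sym _ _ Hab)) as Ra.
  rewrite inv_mul.
  transitivity (i a ** (a ** (i a ** i x ** (x ** a))) ** i a ** b).
  - rewrite L. norm. rewrite inv_r. reflexivity.
  - norm. rewrite inv_r.
    replace (i a ** i x ** x ** a ** i a ** b) with (i a ** i x ** x ** (a ** i a ** b)) by (norm; reflexivity).
    rewrite Ra. norm. reflexivity.
Qed.

End IS.

Theorem lemma3p4 (Q : InverseSemigroup) (S : Q -> Prop)
  (HS : straight_left_I_order S)
  (a b c d : Q) (Ha : S a) (Hb : S b) (Hc : S c) (Hd : S d)
  (Hab : greenR a b) (Hcd : greenR c d) :
  mul (inv a) b = mul (inv c) d <->
  exists x y : Q, S x /\ S y /\
    mul x a = mul y c /\ mul x b = mul y d /\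
    greenR x (mul x a) /\ greenL (mul x a) a /\
    greenR y (mul y c) /\ greenL (mul y c) c.
Proof.
  destruct HS as [HSS HSq].
  split.
  - intro H.
    pose proof (LemR _ a b Hab) as Rb.
    pose proof (LemR _ c d Hcd) as Rd.
    pose proof (LemR _ b a (greenR_sym _ _ _ Hab)) as Ra.
    assert (E1 : mul (inv a) a = mul (inv c) c).
    { transitivity (mul (mul (inv a) b) (inv (mul (inv a) b))).
      - rewrite inv_mul, inv_inv.
        replace (mul (mul (inv a) b) (mul (inv b) a)) with (mul (inv a) (mul (mul b (inv b)) a))
          by (repeat rewrite mul_assoc; reflexivity).
        rewrite Rb. reflexivity.
      - rewrite H. rewrite inv_mul, inv_inv.
        replace (mul (mul (inv c) d) (mul (inv d) c)) with (mul (inv c) (mul (mul d (inv d)) c))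
          by (repeat rewrite mul_assoc; reflexivity).
        rewrite Rd. reflexivity. }
    destruct (HSq (mul a (inv c))) as [x [y [Sx [Sy [Rxy Hq]]]]].
    assert (Hy : y = mul x (mul a (inv c))).
    { rewrite Hq. replace (mul x (mul (inv x) y)) with (mul (mul x (inv x)) y)
        by (repeat rewrite mul_assoc; reflexivity).
      symmetry; apply LemR; apply greenR_sym; exact Rxy. }
    assert (E2 : mul x a = mul y c).
    { rewrite Hy. replace (mul (mul x (mul a (inv c))) c) with (mul x (mul a (mul (inv c) c)))
        by (repeat rewrite mul_assoc; reflexivity).
      rewrite <- E1. repeat rewrite mul_assoc. rewrite inv_l'. reflexivity. }
    assert (E3 : mul x b = mul y d).
    { rewrite Hy. replace (mul (mul x (mul a (inv c))) d) with (mul (mul x a) (mul (inv c) d))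
        by (repeat rewrite mul_assoc; reflexivity).
      rewrite <- H.
      replace (mul (mul x a) (mul (inv a) b)) with (mul x (mul (mul a (inv a)) b))
        by (repeat rewrite mul_assoc; reflexivity).
      rewrite Ra. reflexivity. }
    assert (Hxc : mul (mul y c) (inv c) = y).
    { rewrite Hy. repeat rewrite mul_assoc. rewrite inv_r'. reflexivity. }
    assert (Ca : mul c (inv a) = mul (inv y) x).
    { pose proof (f_equal inv Hq) as Hi. rewrite !inv_mul, !inv_inv in Hi. exact Hi. }
    exists x, y. repeat split; auto.
    + right. exists (mul (mul (inv c) (inv y)) x).
      replace (mul (mul x a) (mul (mul (inv c) (inv y)) x)) with (mul (mul (mul x (mul a (inv c))) (inv y)) x)
        by (repeat rewrite mul_assoc; reflexivity).
      rewrite <- Hy. symmetry. apply LemR. exact Rxy.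
    + right. exists a. reflexivity.
    + right. exists x. reflexivity.
    + right. exists (inv x).
      transitivity (mul (mul a (inv c)) c).
      * replace (mul (mul a (inv c)) c) with (mul a (mul (inv c) c))
          by (repeat rewrite mul_assoc; reflexivity).
        rewrite <- E1. rewrite mul_assoc. rewrite inv_l. reflexivity.
      * rewrite Hq. rewrite E2. repeat rewrite mul_assoc. reflexivity.
    + right. exists (inv c). symmetry. exact Hxc.
    + right. exists c. reflexivity.
    + right. exists y. reflexivity.
    + right. exists (inv y).
      rewrite <- E2.
      replace (mul (inv y) (mul x a)) with (mul (mul (inv y) x) a)
        by (repeat rewrite mul_assoc; reflexivity).
      rewrite <- Ca.
      replace (mul (mul c (inv a)) a) with (mul c (mul (inv a) a))
        by (repeat rewrite mul_assoc; reflexivity).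
      rewrite E1. rewrite mul_assoc. rewrite inv_l. reflexivity.
  - intros [x [y [Sx [Sy [E2 [E3 [_ [La [_ Lc]]]]]]]]].
    rewrite (back Q a b x Hab La), (back Q c d y Hcd Lc), E2, E3. reflexivity.
Qed.
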